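(* $h_\omega(w)=\frac w4+O(w^{3/4})$; that is, there exist constants $C>0$ and $w_0\ge1$ such that $h_\omega(w)\le\frac w4+Cw^{3/4}$ for all real $w\ge w_0$.
   Context: A weighted digraph $D=(V,A,w_D)$ is a digraph without loops or parallel arcs (opposite arcs allowed) with weights $w_D:A\to\mathbb{R}_{\ge0}$; $w(D)$ is its total arc weight. For a partition $(X,Y)$ of $V$, the dicut $(X,Y)$ consists of the arcs from $X$ to $Y$, and its weight is their total weight. $\mathcal{D}_\omega(w)$ is the set of weighted digraphs $D$ in which every arc has weight at least $1$ and $w(D)=w$. For real $w\ge1$, $h_\omega(w)$ is the supremum of reals $g$ such that every acyclic $D\in\mathcal{D}_\omega(w)$ has a dicut of weight at least $g$. *)

(* Defs.v *)
From mathcomp Require Import all_boot all_order all_algebra.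
From mathcomp Require Import classical_sets reals exp.
Set Implicit Arguments. Unset Strict Implicit. Unset Printing Implicit Defensive.
Import Order.TTheory GRing.Theory Num.Theory.
Local Open Scope ring_scope.
Local Open Scope classical_set_scope.

(* A weighted digraph is given by a finite vertex type V, an arc relation
   [arc : rel V] (arc u v means there is an arc u -> v; being a relation,
   there are no parallel arcs, while opposite arcs are allowed) and a weight
   function [wt : V -> V -> R] whose values matter only on arcs. *)

Section WDigraph.
Variables (R : realType) (V : finType).

Definition total_weight (arc : rel V) (wt : V -> V -> R) : R :=
  \sum_(u : V) \sum_(v : V | arc u v) wt u v.

Definition dicut_weight (arc : rel V) (wt : V -> V -> R) (X : {set V}) : R :=
  \sum_(u in X) \sum_(v in ~: X | arc u v) wt u v.

Definition acyclic (arc : rel V) : Prop :=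
  forall u v, arc u v -> ~~ connect arc v u.

Definition in_Domega (w : R) (arc : rel V) (wt : V -> V -> R) : Prop :=
  irreflexive arc /\ (forall u v, arc u v -> 1 <= wt u v) /\
  total_weight arc wt = w.
End WDigraph.

Definition h_omega (R : realType) (w : R) : R :=
  sup [set g : R | forall (V : finType) (arc : rel V) (wt : V -> V -> R),
         in_Domega w arc wt -> acyclic arc ->
         exists X : {set V}, g <= dicut_weight arc wt X].

(* Main.v *)
Require Import Defs.
From mathcomp Require Import all_boot all_order all_algebra.
From mathcomp Require Import classical_sets reals exp.
From mathcomp Require Import ring lra zify.
Import Order.TTheory GRing.Theory Num.Theory.
Local Open Scope ring_scope.

Section W.
Variable R : realType.

Lemma win_id (y : nat -> R) (r : nat) :
  2 * (\sum_(q < r) \sum_(p < q) y p * (1 - y q)) =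
  2 * ((r%:R - 1) * \sum_(p < r) y p) - (\sum_(p < r) y p) ^+ 2
  + \sum_(p < r) y p ^+ 2 - 2 * \sum_(p < r) p%:R * y p.
Proof.
elim: r => [|r IH]; first by rewrite !big_ord0; ring.
rewrite !big_ord_recr /= mulrDr IH.
have -> : \sum_(i < r) y i * (1 - y r) = (\sum_(i < r) y i) * (1 - y r).
  by rewrite mulr_suml.
rewrite -natr1; ring.
Qed.

Lemma win_le (y : nat -> R) (r : nat) : (forall i, 0 <= y i <= 1) ->
  \sum_(q < r) \sum_(p < q) y p * (1 - y q) <=
  r%:R ^+ 2 / 8 + ((r%:R - 1) * \sum_(p < r) y p - 2 * \sum_(p < r) p%:R * y p) / 2.
Proof.
move=> hy.
have hS : \sum_(p < r) y p ^+ 2 <= \sum_(p < r) y p.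
  apply: ler_sum => i _; have /andP[h0 h1] := hy i.
  by rewrite expr2 ler_piMr.
have := win_id y r.
set M := \sum_(p < r) y p; set D := \sum_(q < r) _; set P := \sum_(p < r) _ * _.
move=> e.
have hsq : 0 <= (r%:R / 2 - M) ^+ 2 by exact: sqr_ge0.
have ex : (r%:R / 2 - M) ^+ 2 = r%:R ^+ 2 / 4 - r%:R * M + M ^+ 2 by field.
rewrite ex in hsq.
move: e hS hsq; rewrite -/M -/P; move=> e hS hsq. clearbody M D P; rewrite mulrBl mul1r in e *; lra.
Qed.

End W.

Section W.
Variable R : realType.
Variable x : nat -> R.
Variable s : nat.

Definition gg (q : nat) : R := (q.+1)%:R * (s%:R - q%:R) / 2.
Definition GG (k : nat) : R := \sum_(q < s.+1) gg q * x (k + q).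
Definition LL (k : nat) : R :=
  (s%:R * \sum_(p < s.+1) x (k + p) - 2 * \sum_(p < s.+1) p%:R * x (k + p)) / 2.

Lemma LL_tele k : LL k = GG k - GG k.+1.
Proof.
have e1 : GG k = gg 0 * x k + \sum_(i < s) gg i.+1 * x (k + i.+1).
  by rewrite /GG big_ord_recl addn0.
have e2 : GG k.+1 = \sum_(i < s) gg i * x (k + i.+1).
  rewrite /GG big_ord_recr /=.
  have -> : gg s = 0 by rewrite /gg subrr mulr0 mul0r.
  by rewrite mul0r addr0; apply: eq_bigr => i _; rewrite addSnnS.
have e3 : \sum_(p < s.+1) x (k + p) = x k + \sum_(i < s) x (k + i.+1).
  by rewrite big_ord_recl addn0.
have e4 : \sum_(p < s.+1) p%:R * x (k + p) = \sum_(i < s) i.+1%:R * x (k + i.+1).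
  by rewrite big_ord_recl mul0r add0r.
rewrite /LL e1 e2 e3 e4.
have e5 : \sum_(i < s) gg i.+1 * x (k + i.+1) - \sum_(i < s) gg i * x (k + i.+1)
   = s%:R * (\sum_(i < s) x (k + i.+1)) / 2 - \sum_(i < s) i.+1%:R * x (k + i.+1).
  rewrite -sumrB mulr_sumr big_distrl -sumrB /=.
  apply: eq_bigr => i _; rewrite /gg -!natr1; by field.
have -> : gg 0 = s%:R / 2 by rewrite /gg mul1r subr0.
move: e5; set A := \sum_(i < s) _; set B := \sum_(i < s) _; set C := \sum_(i < s) _;
  set D := \sum_(i < s) _ => e5.
rewrite (_ : A = B + (s%:R * C / 2 - D)); last by rewrite -e5 addrC subrK.
by field.
Qed.

Lemma tele m : \sum_(k < m) LL k = GG 0 - GG m.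
Proof.
elim: m => [|m IH]; first by rewrite big_ord0 subrr.
by rewrite big_ord_recr /= IH LL_tele; ring.
Qed.

Hypothesis hx : forall i, 0 <= x i <= 1.

Lemma gg_ge0 (i : 'I_s.+1) : 0 <= gg i.
Proof.
have hi : (i%:R : R) <= s%:R by rewrite ler_nat -ltnS.
rewrite /gg; apply: divr_ge0 => //; apply: mulr_ge0 => //.
by rewrite subr_ge0.
Qed.

Lemma gg_le (i : 'I_s.+1) : gg i <= (s.+1)%:R ^+ 2.
Proof.
have hi : (i%:R : R) <= s%:R by rewrite ler_nat -ltnS.
have h0 : (0 : R) <= i%:R by [].
have h1 : (i.+1%:R : R) * (s%:R - i%:R) <= s.+1%:R * s.+1%:R.
  apply: ler_pM => //; first by rewrite subr_ge0.
    by rewrite ler_nat ltn_ord.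
  rewrite -natr1; lra.
rewrite /gg expr2.
have h2 : (0:R) <= s.+1%:R * s.+1%:R by apply: mulr_ge0.
lra.
Qed.

Lemma GG_ge0 k : 0 <= GG k.
Proof.
apply: sumr_ge0 => i _; apply: mulr_ge0; first exact: gg_ge0.
by case/andP: (hx (k + i)).
Qed.

Lemma GG_le k : GG k <= (s.+1)%:R ^+ 3.
Proof.
apply: (@le_trans _ _ (\sum_(q < s.+1) (s.+1)%:R ^+ 2)).
  apply: ler_sum => i _; have /andP[h0 h1] := hx (k + i).
  apply: (@le_trans _ _ (gg i)); first by rewrite ler_piMr // gg_ge0.
  exact: gg_le.
by rewrite sumr_const card_ord [X in _ <= X]exprSr mulr_natr.
Qed.

End W.

Section S.
Variable R : realType.

Lemma sum_pick n j (hj : (j < n)%N) (G : nat -> R) :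
  \sum_(u < n) (if val u == j then G u else 0) = G j.
Proof.
rewrite -big_mkcond (big_pred1 (Ordinal hj)) //.
Qed.

Lemma sum_window n k a (G : nat -> R) : (k + a <= n)%N ->
  \sum_(u < n) (if (k <= u)%N && (u < k + a)%N then G u else 0) = \sum_(p < a) G (k + p).
Proof.
elim: a => [|a IH] h.
  rewrite big_ord0; apply: big1 => u _.
  by rewrite addn0; case: leqP => //= hu; rewrite ltnNge hu.
rewrite big_ord_recr /= -IH; last by lia.
rewrite -(@sum_pick n (k + a)); last by lia.
rewrite -big_split /=; apply: eq_bigr => u _.
case: (ltngtP u (k + a)) => hu.
- have -> : (u < k + a.+1)%N by lia.
  by rewrite addr0 andbT.
- have -> : (u < k + a.+1)%N = false by lia.
  by rewrite !andbF addr0.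
- have -> : (k <= u < k + a.+1)%N by rewrite hu; lia.
  by rewrite andbF add0r.
Qed.

Lemma sum_pairs n k r (F : nat -> nat -> R) : (k + r <= n)%N ->
  \sum_(u < n) \sum_(v < n) (if [&& (u < v)%N, (k <= u)%N & (v < k + r)%N] then F u v else 0)
  = \sum_(q < r) \sum_(p < q) F (k + p) (k + q).
Proof.
move=> h; rewrite exchange_big /=.
transitivity (\sum_(v < n) (if (k <= v)%N && (v < k + r)%N then
   \sum_(p < v - k) F (k + p) v else 0)).
  apply: eq_bigr => v _; case: ifP => hv.
    rewrite -(@sum_window n k (v - k) (fun u => F u v)); last by have := ltn_ord v; lia.
    apply: eq_bigr => u _.
    have -> : [&& (u < v)%N, (k <= u)%N & (v < k + r)%N] = (k <= u)%N && (u < k + (v - k))%N.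
      by move/andP: hv => [h1 h2]; apply/idP/idP; lia.
    by [].
  apply: big1 => u _.
  by rewrite (_ : [&& _, _ & _] = false) //; move: hv; lia.
rewrite (@sum_window n k r (fun v => \sum_(p < v - k) F (k + p) v)) //; apply: eq_bigr => q _.
by rewrite addKn.
Qed.

End S.

Definition mm s := (s.+1 * s.+1)%N.
Definition nn s := (mm s + s).+1.
Definition garc s : rel 'I_(nn s) := fun u v =>
  (u < v)%N && [exists k : 'I_(mm s), (k <= u)%N && (v < k + s.+1)%N].

Section S.
Variable R : realType.
Variable s : nat.

Definition cnt (u v : 'I_(nn s)) : R :=
  \sum_(k < mm s) (if (k <= u)%N && (v < k + s.+1)%N then 1 else 0).

Lemma key (F : nat -> nat -> R) :
  \sum_(u : 'I_(nn s)) \sum_(v : 'I_(nn s) | garc s u v) cnt u v * F u v =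
  \sum_(k < mm s) \sum_(q < s.+1) \sum_(p < q) F (k + p)%N (k + q)%N.
Proof.
transitivity (\sum_(u : 'I_(nn s)) \sum_(v : 'I_(nn s)) \sum_(k < mm s)
   (if [&& (u < v)%N, (k <= u)%N & (v < k + s.+1)%N] then F u v else 0)).
  apply: eq_bigr => u _; rewrite big_mkcond; apply: eq_bigr => v _.
  rewrite /garc /cnt mulr_suml.
  case: ifP => [/andP[-> _]|].
    by apply: eq_bigr => k _; case: ifP; rewrite ?mul1r ?mul0r.
  move=> hn; apply/esym/big1 => k _.
  case: ifP => // /and3P[h1 h2 h3]; rewrite h1 /= in hn.
  by move/negbT/existsPn: hn => /(_ k); rewrite h2 h3.
rewrite (eq_bigr (fun u : 'I_(nn s) => \sum_(k < mm s) \sum_(v : 'I_(nn s))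
   (if [&& (u < v)%N, (k <= u)%N & (v < k + s.+1)%N] then F u v else 0))); last first.
  by move=> u _; rewrite exchange_big.
rewrite exchange_big; apply: eq_bigr => k _.
apply: sum_pairs.
by have := ltn_ord k; rewrite /nn; lia.
Qed.

End S.

Section S.
Variable R : realType.
Variable s : nat.
Variable t : R.

Definition gwt (u v : 'I_(nn s)) : R := t * cnt R s u v.

Lemma sum_nat n : \sum_(q < n) (q%:R : R) = n%:R * (n%:R - 1) / 2.
Proof.
elim: n => [|n IH]; first by rewrite big_ord0 mul0r mul0r.
by rewrite big_ord_recr /= IH -natr1; field.
Qed.

Lemma total_eq : total_weight (garc s) gwt =
  t * ((mm s)%:R * ((s.+1)%:R * s%:R / 2)).
Proof.
rewrite /total_weight /gwt.
transitivity (t * \sum_(u : 'I_(nn s)) \sum_(v : 'I_(nn s) | garc s u v)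
   cnt R s u v * (fun _ _ => (1 : R)) u v).
  rewrite mulr_sumr; apply: eq_bigr => u _; rewrite mulr_sumr.
  by apply: eq_bigr => v _; rewrite mulr1.
rewrite (key R s (fun _ _ => 1)); congr (t * _).
rewrite (eq_bigr (fun _ => (s.+1)%:R * s%:R / 2)); last first.
  move=> k _; transitivity (\sum_(q < s.+1) (q%:R : R)).
    by apply: eq_bigr => q _; rewrite sumr_const card_ord.
  by rewrite sum_nat -natr1 addrK.
by rewrite sumr_const card_ord [RHS]mulr_natl.
Qed.

Variable X : {set 'I_(nn s)}.

Definition xs (p : nat) : R :=
  if (p < nn s)%N then (if @inord (mm s + s) p \in X then 1 else 0) else 0.

Lemma xsE (u : 'I_(nn s)) : xs u = if u \in X then 1 else 0.
Proof. by rewrite /xs ltn_ord inord_val. Qed.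

Lemma xs01 p : 0 <= xs p <= 1.
Proof. by rewrite /xs; case: ifP => _; [case: ifP => _|]; rewrite ?lexx ?ler01. Qed.

Lemma dicut_eq : dicut_weight (garc s) gwt X =
  t * \sum_(u : 'I_(nn s)) \sum_(v : 'I_(nn s) | garc s u v)
     cnt R s u v * (xs u * (1 - xs v)).
Proof.
rewrite /dicut_weight /gwt mulr_sumr big_mkcond; apply: eq_bigr => u _.
rewrite xsE; case: ifP => hu.
  rewrite mulr_sumr big_mkcond [RHS]big_mkcond; apply: eq_bigr => v _.
  rewrite xsE inE; case: (v \in X); case: (garc s u v) => //=.
  - by rewrite subrr !mulr0.
  - by rewrite subr0 !mulr1.
apply/esym; rewrite mulr_sumr; apply: big1 => v _.
by rewrite mul0r mulr0 mulr0.
Qed.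

Lemma dicut_le : 0 <= t -> dicut_weight (garc s) gwt X <=
  t * ((mm s)%:R * (s.+1)%:R ^+ 2 / 8 + (s.+1)%:R ^+ 3).
Proof.
move=> ht; rewrite dicut_eq (key R s (fun p q => xs p * (1 - xs q))).
apply: ler_wpM2l => //.
apply: (@le_trans _ _ (\sum_(k < mm s) ((s.+1)%:R ^+ 2 / 8 + LL R xs s k))).
  apply: ler_sum => k _.
  apply: le_trans (@win_le R (fun p => xs (k + p)) (s.+1) (fun i => xs01 _)) _.
  by rewrite /LL -natr1 addrK.
rewrite big_split /= tele sumr_const card_ord -mulr_natl.
have h1 := @GG_le R xs s xs01 0.
have h2 := @GG_ge0 R xs s xs01 (mm s).
rewrite mulrA; lra.
Qed.

End S.

Lemma connect_le n (e : rel 'I_n) : (forall x y, e x y -> (x < y)%N) ->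
  forall x y, connect e x y -> (x <= y)%N.
Proof.
move=> he x y /connectP [p pth ->]; elim: p x pth => //= z p IH x /andP[exz pth].
exact: leq_trans (ltnW (he _ _ exz)) (IH _ pth).
Qed.

Lemma cnt_ge1 (R : realType) s (u v : 'I_(nn s)) : garc s u v -> 1 <= cnt R s u v.
Proof.
case/andP=> _ /existsP [k hk]; rewrite /cnt (bigD1 k) //= hk.
rewrite lerDl; apply: sumr_ge0 => i _; by case: ifP.
Qed.

Lemma graph_in (R : realType) s (t w : R) : 1 <= t ->
  t * ((mm s)%:R * ((s.+1)%:R * s%:R / 2)) = w ->
  in_Domega w (garc s) (gwt R s t) /\ acyclic (garc s).
Proof.
move=> ht hw; split; last first.
  move=> u v /andP [huv _]; apply/negP => hc.
  have hlt : forall x y, garc s x y -> (x < y)%N by move=> x y /andP[].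
  by have := @connect_le _ _ hlt _ _ hc; rewrite leqNgt huv.
split; first by move=> u; rewrite /garc ltnn.
split; last by rewrite total_eq.
by move=> u v huv; rewrite /gwt; apply: mulr_ege1 => //; apply: cnt_ge1.
Qed.

Theorem mainTheorem11 (R : realType) :
  exists C : R, 0 < C /\
  exists w0 : R, 1 <= w0 /\
  forall w : R, w0 <= w -> h_omega w <= w / 4 + C * powR w (3 / 4).
Proof.
exists 8; split; first by []. exists 16; split; first by rewrite ler1n.
move=> w hw.
have w0 : 0 <= w by lra.
set a := powR w (1/4).
set b := powR w (3/4).
have a0 : 0 <= a by apply: powR_ge0.
have b0 : 0 <= b by apply: powR_ge0.
have a4 : a ^+ 4 = w.
  rewrite -powR_mulrn // /a -powRrM (_ : 1/4 * 4%:R = 1); last by field.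
  by rewrite powRr1.
have wab : w = a * b.
  rewrite /a /b -powRD; last by apply/implyP => _; apply/eqP => w00; lra.
  rewrite (_ : 1/4 + 3/4 = 1); last by field.
  by rewrite powRr1.
have a2 : 2 <= a.
  rewrite -(ler_pXn2r (n:=4)) //; last by rewrite nnegrE.
  by rewrite a4 (_ : (2:R) ^+ 4 = 16) //; rewrite !exprS expr0; lra.
have hr : (2 <= Num.truncn a)%N by rewrite truncn_ge_nat.
set s := (Num.truncn a).-1.
have hs : Num.truncn a = s.+1 by rewrite /s prednK //; lia.
have hS1 : (s.+1)%:R <= a by rewrite -hs truncn_le.
have hS2 : a < (s.+2)%:R by rewrite -hs truncnS_gt.
have s1 : (1 : R) <= s%:R.
  by rewrite ler1n -ltnS -hs.
set S := (s%:R : R).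
have eS1 : (s.+1)%:R = S + 1 :> R by rewrite -natr1.
have eS2 : (s.+2)%:R = S + 2 :> R by rewrite -!natr1 /S; lra.
rewrite eS1 in hS1; rewrite eS2 in hS2.
have emm : (mm s)%:R = (S + 1) ^+ 2 :> R by rewrite /mm natrM eS1 expr2.
set W := (mm s)%:R * ((s.+1)%:R * s%:R / 2) : R.
have eW : W = (S + 1) ^+ 3 * S / 2 by rewrite /W emm eS1 -/S; ring.
have W0 : 0 < W by rewrite eW; apply: divr_gt0 => //; apply: mulr_gt0 => //;
  [apply: exprn_gt0|]; lra.
have Ww : W <= w.
  rewrite eW -a4.
  have h1 : (S + 1) ^+ 4 <= a ^+ 4 by apply: lerXn2r => //; rewrite nnegrE; lra.
  apply: le_trans h1.
  have p3 : 0 <= (S+1)^+3 by apply: exprn_ge0; lra.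
  have -> : (S+1)^+4 = (S+1)^+3 * (S+1) by rewrite exprSr.
  nra.
set t := w / W.
have ht : 1 <= t by rewrite /t ler_pdivlMr // mul1r.
have htw : t * W = w by rewrite /t divfK // gt_eqF.
apply: ge_sup.
  exists 0 => V arc wt _ _; exists finset.set0.
  by rewrite /dicut_weight big_set0.
move=> g hg.
have [hin hac] := @graph_in R s t w ht htw.
have [X hX] := hg _ _ _ hin hac.
have hd := @dicut_le R s t X (le_trans ler01 ht).
have S0 : 0 < S by lra.
have hT : t * (S+1)^+3 = 2 * (w / S).
  rewrite eW in htw; rewrite -[in RHS]htw; field; lra.
have hq : w / S <= 3 * b.
  rewrite ler_pdivrMr // {1}wab.
  have : a * b <= (S + 2) * b by apply: ler_wpM2r => //; lra.
  nra.
apply: le_trans hX (le_trans hd _); rewrite emm eS1.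
have -> : t * ((S + 1) ^+ 2 * (S + 1) ^+ 2 / 8 + (S + 1) ^+ 3) =
  (t * (S+1)^+3) * ((S+1)/8 + 1) by ring.
rewrite hT.
have ws : w / S * S = w by rewrite divfK // gt_eqF.
move: hq ws; set q := w / S => hq ws.
lra.
Qed.
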